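(* Let $W\in[0,1]^{k\times k}$ be a symmetric positive semidefinite matrix with unit diagonal, let $\mu>0$, and consider the collaborative learning problem with strategy space $\mathbb{R}_+^k$, utilities $u_i({\boldsymbol\theta})=W_i^\top{\boldsymbol\theta}$ ($W_i$ the $i$-th column of $W$) and thresholds $\mu_i=\mu$. If ${\boldsymbol\theta}^{\mathrm{eq}}$ is an optimal stable equilibrium with ${\boldsymbol\theta}^{\mathrm{eq}}>\mathbf{0}$ (all entries positive), then ${\boldsymbol\theta}^{\mathrm{eq}}$ is socially optimal.
   Context: ${\boldsymbol\theta}$ is feasible if $u_i({\boldsymbol\theta})\ge\mu$ for all $i$. A feasible ${\boldsymbol\theta}\in\mathbb{R}_+^k$ is a stable equilibrium if for no $i$ is there $0\le\theta_i'<\theta_i$ with $u_i(\theta_i',{\boldsymbol\theta}_{-i})\ge\mu$. An optimal stable equilibrium minimizes $\mathbf{1}^\top{\boldsymbol\theta}$ among stable equilibria. A socially optimal solution minimizes $\mathbf{1}^\top{\boldsymbol\theta}$ over all feasible ${\boldsymbol\theta}\ge\mathbf{0}$. *)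

(* Defs.v *)
From mathcomp Require Import all_boot all_order all_algebra.
Set Implicit Arguments. Unset Strict Implicit. Unset Printing Implicit Defensive.
Import Order.TTheory GRing.Theory Num.Theory.
Local Open Scope ring_scope.

Section Collab.
Variables (R : realFieldType) (k : nat).

Definition symmetric_mx (W : 'M[R]_k) : Prop := W^T = W.
Definition psd_mx (W : 'M[R]_k) : Prop :=
  forall x : 'cV[R]_k, 0 <= (x^T *m W *m x) ord0 ord0.
Definition entries01 (W : 'M[R]_k) : Prop :=
  forall i j, 0 <= W i j <= 1.
Definition unit_diag (W : 'M[R]_k) : Prop := forall i, W i i = 1.

Definition util (W : 'M[R]_k) (i : 'I_k) (theta : 'cV[R]_k) : R :=
  ((col i W)^T *m theta) ord0 ord0.

Definition nonneg_vec (theta : 'cV[R]_k) : Prop := forall i, 0 <= theta i ord0.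
Definition pos_vec (theta : 'cV[R]_k) : Prop := forall i, 0 < theta i ord0.

Definition total (theta : 'cV[R]_k) : R := \sum_i theta i ord0.

Definition feasible (W : 'M[R]_k) (mu : R) (theta : 'cV[R]_k) : Prop :=
  nonneg_vec theta /\ forall i, mu <= util W i theta.

Definition upd (theta : 'cV[R]_k) (i : 'I_k) (t : R) : 'cV[R]_k :=
  \col_j (if j == i then t else theta j ord0).

Definition stable_eq (W : 'M[R]_k) (mu : R) (theta : 'cV[R]_k) : Prop :=
  feasible W mu theta /\
  forall i (t : R), 0 <= t -> t < theta i ord0 -> ~ (mu <= util W i (upd theta i t)).

Definition optimal_stable_eq (W : 'M[R]_k) (mu : R) (theta : 'cV[R]_k) : Prop :=
  stable_eq W mu theta /\
  forall theta', stable_eq W mu theta' -> total theta <= total theta'.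

Definition socially_optimal (W : 'M[R]_k) (mu : R) (theta : 'cV[R]_k) : Prop :=
  feasible W mu theta /\
  forall theta', feasible W mu theta' -> total theta <= total theta'.

End Collab.

(* Main.v *)
Require Import Defs.
From mathcomp Require Import all_boot all_order all_algebra.
From mathcomp Require Import ring lra.
Import Order.TTheory GRing.Theory Num.Theory.
Local Open Scope ring_scope.

Lemma utilE (R : realFieldType) (k : nat) (W : 'M[R]_k) i theta :
  util W i theta = \sum_j W j i * theta j ord0.
Proof. by rewrite /util !mxE; apply: eq_bigr => j _; rewrite !mxE. Qed.

Lemma util_upd (R : realFieldType) (k : nat) (W : 'M[R]_k) i theta t :
  util W i (upd theta i t) = util W i theta + W i i * (t - theta i ord0).
Proof.
rewrite !utilE (bigD1 i) //= [in RHS](bigD1 i) //= !mxE eqxx.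
have -> : \sum_(j < k | j != i) W j i * upd theta i t j ord0 =
          \sum_(j < k | j != i) W j i * theta j ord0.
  by apply: eq_bigr => j /negbTE hj; rewrite !mxE hj.
ring.
Qed.

Theorem corollary1 (R : realFieldType) (k : nat) (W : 'M[R]_k) (mu : R)
  (theta_eq : 'cV[R]_k) :
  symmetric_mx W -> psd_mx W -> entries01 W -> unit_diag W -> 0 < mu ->
  optimal_stable_eq W mu theta_eq -> pos_vec theta_eq ->
  socially_optimal W mu theta_eq.
Proof.
move=> hsym _ _ hdiag hmu [[[hnn hfeas] hstab] _] hpos.
have tight : forall i, util W i theta_eq = mu.
  move=> i; apply/eqP; rewrite eq_le hfeas andbT; rewrite leNgt; apply/negP => hlt.
  have hi := hpos i.
  have hu := @util_upd _ _ W i theta_eq.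
  have {}hu : forall t, util W i (upd theta_eq i t) = util W i theta_eq + (t - theta_eq i ord0) by move=> t; rewrite hu hdiag mul1r.
  case: (lerP (theta_eq i ord0) (util W i theta_eq - mu)) => hc.
  - apply: (hstab i 0) => //; rewrite hu; lra.
  - apply: (hstab i (theta_eq i ord0 - (util W i theta_eq - mu))); try lra.
    rewrite hu; lra.
have Wsym : forall i j, W i j = W j i.
  by move=> i j; have := congr1 (fun M : 'M[R]_k => M j i) (hsym : W^T = W); rewrite mxE.
split; first by split.
move=> x [xnn xfeas].
rewrite -(ler_pM2r hmu).
have -> : Defs.total x * mu = \sum_i theta_eq i ord0 * util W i x.
  rewrite /Defs.total mulr_suml.
  transitivity (\sum_j \sum_i x j ord0 * (W i j * theta_eq i ord0)).
    by apply: eq_bigr => j _; rewrite -(tight j) utilE mulr_sumr.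
  rewrite exchange_big /=; apply: eq_bigr => i _; rewrite utilE mulr_sumr.
  by apply: eq_bigr => j _; rewrite (Wsym i j); ring.
rewrite /Defs.total mulr_suml; apply: ler_sum => i _.
by apply: ler_wpM2l; [exact: ltW | exact: xfeas].
Qed.
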